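(* Let $G$ be a group and $N$ a normal subgroup of $G$. If $S=\bigoplus_{g\in G}S_g$ is symmetrically $G$-graded, then the induced $G/N$-grading $\{S_C\}_{C\in G/N}$ is symmetric, i.e. $S_CS_{C^{-1}}S_C=S_C$ for all $C\in G/N$.
   Context: Rings are associative, not necessarily unital; $AB$ denotes finite sums of products. A $G$-grading: $S=\bigoplus_gS_g$, $S_gS_h\subseteq S_{gh}$; it is symmetric if $S_gS_{g^{-1}}S_g=S_g$ for all $g\in G$. The induced $G/N$-grading is $S_C=\bigoplus_{g\in C}S_g$ for $C\in G/N$. *)

(* Defs.v *)
(* Abstract (possibly infinite) groups and non-unital rings
   are given by explicit carriers/operations with axioms. *)
From mathcomp Require Import all_boot all_algebra.
From Stdlib Require List.
Set Implicit Arguments. Unset Strict Implicit. Unset Printing Implicit Defensive.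
Import GRing.Theory.
Local Open Scope ring_scope.

Record is_group (G : Type) (op : G -> G -> G) (e : G) (inv : G -> G) : Prop := {
  grp_assoc : forall x y z, op x (op y z) = op (op x y) z;
  grp_idl : forall x, op e x = x;
  grp_idr : forall x, op x e = x;
  grp_invl : forall x, op (inv x) x = e;
  grp_invr : forall x, op x (inv x) = e }.

Record is_normal_subgroup (G : Type) (op : G -> G -> G) (e : G) (inv : G -> G)
    (N : G -> Prop) : Prop := {
  nsg_one : N e;
  nsg_mul : forall x y, N x -> N y -> N (op x y);
  nsg_inv : forall x, N x -> N (inv x);
  nsg_conj : forall g x, N x -> N (op (op g x) (inv g)) }.

Record is_rng (S : zmodType) (mul : S -> S -> S) : Prop := {
  rng_assoc : forall x y z, mul x (mul y z) = mul (mul x y) z;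
  rng_mulDl : forall x y z, mul (x + y) z = mul x z + mul y z;
  rng_mulDr : forall x y z, mul x (y + z) = mul x y + mul x z }.

Definition setmul (S : zmodType) (mul : S -> S -> S) (A B : S -> Prop) : S -> Prop :=
  fun s => exists l : seq (S * S),
    (forall p, p \in l -> A p.1 /\ B p.2) /\ s = \sum_(p <- l) mul p.1 p.2.

Record is_grading (G : Type) (op : G -> G -> G) (S : zmodType) (mul : S -> S -> S)
    (Sg : G -> S -> Prop) : Prop := {
  gr_zero : forall g, Sg g 0;
  gr_sub : forall g x y, Sg g x -> Sg g y -> Sg g (x - y);
  gr_mul : forall g h s, setmul mul (Sg g) (Sg h) s -> Sg (op g h) s;
  gr_span : forall s, exists (l : list G) (x : G -> S),
      (forall g, List.In g l -> Sg g (x g)) /\ s = \sum_(g <- l) x g;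
  gr_indep : forall (l : list G) (x : G -> S), List.NoDup l ->
      (forall g, List.In g l -> Sg g (x g)) -> \sum_(g <- l) x g = 0 ->
      forall g, List.In g l -> x g = 0 }.

Definition symmetric_grading (G : Type) (inv : G -> G) (S : zmodType)
    (mul : S -> S -> S) (Sg : G -> S -> Prop) : Prop :=
  forall g s, setmul mul (setmul mul (Sg g) (Sg (inv g))) (Sg g) s <-> Sg g s.

(* C is a (left) coset gN of N, i.e. an element of G/N *)
Definition is_coset (G : Type) (op : G -> G -> G) (inv : G -> G) (N : G -> Prop)
    (C : G -> Prop) : Prop :=
  exists g, forall h, C h <-> N (op (inv g) h).

Definition setinv (G : Type) (inv : G -> G) (C : G -> Prop) : G -> Prop :=
  fun h => C (inv h).

Definition induced_comp (G : Type) (S : zmodType) (Sg : G -> S -> Prop)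
    (C : G -> Prop) : S -> Prop :=
  fun s => exists (l : list G) (x : G -> S),
    (forall g, List.In g l -> C g /\ Sg g (x g)) /\ s = \sum_(g <- l) x g.

(* Main.v *)
Require Import Defs.
From mathcomp Require Import all_boot all_algebra.
From Stdlib Require List.
From Stdlib Require Import Classical ClassicalEpsilon.
Set Implicit Arguments. Unset Strict Implicit. Unset Printing Implicit Defensive.
Import GRing.Theory.
Local Open Scope ring_scope.

Lemma setmul_ind (S : zmodType) (mul : S -> S -> S) (A B P : S -> Prop) s :
  P 0 -> (forall x y, P x -> P y -> P (x + y)) ->
  (forall a b, A a -> B b -> P (mul a b)) -> setmul mul A B s -> P s.
Proof.
move=> P0 PD Pab [l [Hl ->]].
elim: l Hl => [|p l IH] Hl; first by rewrite big_nil.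
rewrite big_cons; apply: PD.
  by have [] := Hl p (mem_head _ _); apply: Pab.
by apply: IH => q Hq; apply: Hl; rewrite in_cons Hq orbT.
Qed.

Lemma setmul0 (S : zmodType) (mul : S -> S -> S) (A B : S -> Prop) :
  setmul mul A B 0.
Proof. by exists [::]; split => //; rewrite big_nil. Qed.

Lemma setmulD (S : zmodType) (mul : S -> S -> S) (A B : S -> Prop) x y :
  setmul mul A B x -> setmul mul A B y -> setmul mul A B (x + y).
Proof.
move=> [l1 [H1 ->]] [l2 [H2 ->]]; exists (l1 ++ l2); split; last by rewrite big_cat.
by move=> p; rewrite mem_cat => /orP [] ?; [apply: H1|apply: H2].
Qed.

Lemma setmul_mono (S : zmodType) (mul : S -> S -> S) (A A' B B' : S -> Prop) s :
  (forall a, A a -> A' a) -> (forall b, B b -> B' b) ->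
  setmul mul A B s -> setmul mul A' B' s.
Proof.
move=> HA HB [l [Hl ->]]; exists l; split => // p /Hl [] ? ?; split; auto.
Qed.

Definition PC (G : Type) (S : zmodType) (Sg : G -> S -> Prop) (D : G -> Prop) (s : S) :=
  exists ps : seq (G * S), (forall p, List.In p ps -> D p.1 /\ Sg p.1 p.2) /\
    s = \sum_(p <- ps) p.2.

Lemma PC0 G (S : zmodType) (Sg : G -> S -> Prop) D : PC Sg D 0.
Proof. by exists [::]; split => //; rewrite big_nil. Qed.

Lemma PCD G (S : zmodType) (Sg : G -> S -> Prop) D x y :
  PC Sg D x -> PC Sg D y -> PC Sg D (x + y).
Proof.
move=> [l1 [H1 ->]] [l2 [H2 ->]]; exists (l1 ++ l2); split; last by rewrite big_cat.
by move=> p Hp; case: (List.in_app_or _ _ _ Hp) => ?; [apply: H1|apply: H2].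
Qed.

Lemma PC_hom G (S : zmodType) (Sg : G -> S -> Prop) (D : G -> Prop) g v :
  D g -> Sg g v -> PC Sg D v.
Proof.
move=> Dg Sv; exists [:: (g, v)]; split; last by rewrite big_cons big_nil addr0.
by move=> p [<-|[]].
Qed.

Lemma mul0l (S : zmodType) (mul : S -> S -> S) c : is_rng mul -> mul 0 c = 0.
Proof.
move=> Hr; have h := rng_mulDl Hr 0 0 c; rewrite addr0 in h.
by apply: (addrI (mul 0 c)); rewrite -h addr0.
Qed.

Lemma mul0r (S : zmodType) (mul : S -> S -> S) c : is_rng mul -> mul c 0 = 0.
Proof.
move=> Hr; have h := rng_mulDr Hr c 0 0; rewrite addr0 in h.
by apply: (addrI (mul c 0)); rewrite -h addr0.
Qed.

Lemma PC_mul G (op : G -> G -> G) (S : zmodType) (mul : S -> S -> S)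
  (Sg : G -> S -> Prop) (D1 D2 D3 : G -> Prop) a b :
  is_rng mul -> is_grading op mul Sg ->
  (forall g h, D1 g -> D2 h -> D3 (op g h)) ->
  PC Sg D1 a -> PC Sg D2 b -> PC Sg D3 (mul a b).
Proof.
move=> Hr Hg HD [ps1 [H1 ->]] [ps2 [H2 ->]].
have Hv : forall g v, D1 g -> Sg g v -> PC Sg D3 (mul v (\sum_(p <- ps2) p.2)).
  move=> g v Dg Sv.
  elim: ps2 H2 => [|[h w] ps2 IH2] H2.
    by rewrite big_nil mul0r //; apply: PC0.
  rewrite big_cons rng_mulDr //; apply: PCD; last first.
    by apply: IH2 => p Hp; apply: H2; right.
  have [Dh Sw] := H2 (h, w) (or_introl erefl); simpl in Dh, Sw.
  apply: (PC_hom (g := op g h)); first by apply: HD.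
  apply: (gr_mul Hg); exists [:: (v, w)]; split; last by rewrite big_cons big_nil addr0.
  by move=> p; rewrite inE => /eqP ->.
elim: ps1 H1 => [|[g v] ps1 IH] H1.
  by rewrite big_nil mul0l //; apply: PC0.
rewrite big_cons rng_mulDl //; apply: PCD; last first.
  by apply: IH => p Hp; apply: H1; right.
have [Dg Sv] := H1 (g, v) (or_introl erefl); simpl in Dg, Sv.
exact: Hv Dg Sv.
Qed.

Definition upd (G : Type) (S : Type) (x : G -> S) (g : G) (v : S) : G -> S :=
  fun h => if excluded_middle_informative (h = g) then v else x h.

Lemma sum_upd_notin (G : Type) (S : zmodType) (x : G -> S) g v (l : list G) :
  ~ List.In g l -> \sum_(h <- l) upd x g v h = \sum_(h <- l) x h.
Proof.
elim: l => [|a l IH] Hn; first by rewrite !big_nil.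
rewrite !big_cons IH; last by move=> H; apply: Hn; right.
rewrite /upd; case: excluded_middle_informative => // E.
by exfalso; apply: Hn; left.
Qed.

Lemma Sg_add G op (S : zmodType) (mul : S -> S -> S) (Sg : G -> S -> Prop) g a b :
  is_grading op mul Sg -> Sg g a -> Sg g b -> Sg g (a + b).
Proof.
move=> Hg Ha Hb; have -> : a + b = a - (0 - b) by rewrite sub0r opprK.
by apply: (gr_sub Hg) => //; apply: (gr_sub Hg) => //; apply: (gr_zero Hg).
Qed.

Lemma PC_to_ic G op (S : zmodType) (mul : S -> S -> S) (Sg : G -> S -> Prop) D s :
  is_grading op mul Sg -> PC Sg D s -> induced_comp Sg D s.
Proof.
move=> Hg [ps [Hps ->]].
suff [l [x [_ [H1 H2]]]] : exists l (x : G -> S), List.NoDup l /\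
   (forall g, List.In g l -> D g /\ Sg g (x g)) /\
   \sum_(p <- ps) p.2 = \sum_(g <- l) x g.
  by exists l, x.
elim: ps Hps => [|[g v] ps IH] Hps.
  exists [::], (fun _ => 0); split; first by constructor.
  by split => //; rewrite !big_nil.
have [Dg Sv] := Hps (g, v) (or_introl erefl); simpl in Dg, Sv.
have [l [x [Hnd [Hl Hs]]]] := IH (fun p Hp => Hps p (or_intror Hp)).
rewrite big_cons Hs /=.
case: (classic (List.In g l)) => Hin.
- exists l, (upd x g (x g + v)); split => //; split.
    move=> h Hh; have [Dh Sh] := Hl h Hh; split => //.
    rewrite /upd; case: excluded_middle_informative => // E; subst h.
    by apply: Sg_add Hg _ Sv; have [] := Hl g Hin.
  have [l1 [l2 E]] := List.in_split g l Hin.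
  have Hn := List.NoDup_remove_2 _ _ _ (eq_ind _ _ Hnd _ E).
  have N1 : ~ List.In g l1 by move=> H; apply: Hn; apply: List.in_or_app; left.
  have N2 : ~ List.In g l2 by move=> H; apply: Hn; apply: List.in_or_app; right.
  have U : upd x g (x g + v) g = x g + v.
    by rewrite /upd; case: excluded_middle_informative.
  rewrite E !big_cat /= !big_cons U (sum_upd_notin _ _ N1) (sum_upd_notin _ _ N2).
  by rewrite [v + _]addrC -[x g + v + _]addrA [v + _]addrC !addrA.
- exists (g :: l), (upd x g v); split; first by constructor.
  split.
    move=> h [<-|Hh]; rewrite /upd; case: excluded_middle_informative => // E.
    + by exfalso; apply: Hin; rewrite -E.
    + by apply: Hl.
  rewrite big_cons sum_upd_notin //.
  by rewrite /upd; case: excluded_middle_informative.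
Qed.

Lemma ic_to_PC G (S : zmodType) (Sg : G -> S -> Prop) D s :
  induced_comp Sg D s -> PC Sg D s.
Proof.
move=> [l [x [Hl ->]]]; exists (map (fun g => (g, x g)) l); split.
  move=> p Hp; have [g [<- Hg]] := proj1 (List.in_map_iff _ _ _) Hp; exact: Hl.
by rewrite big_map.
Qed.

Lemma inv_uniq G op (e : G) inv a b : is_group op e inv -> op a b = e -> b = inv a.
Proof.
move=> Hg H.
by rewrite -(grp_idl Hg b) -(grp_invl Hg a) -(grp_assoc Hg) H (grp_idr Hg).
Qed.

Lemma inv_inv G op (e : G) inv a : is_group op e inv -> inv (inv a) = a.
Proof. by move=> Hg; symmetry; exact: (inv_uniq Hg (grp_invl Hg a)). Qed.

Lemma inv_op G op (e : G) inv a b : is_group op e inv -> inv (op a b) = op (inv b) (inv a).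
Proof.
move=> Hg; symmetry; apply: (inv_uniq Hg).
by rewrite (grp_assoc Hg) -(grp_assoc Hg a) (grp_invr Hg) (grp_idr Hg) (grp_invr Hg).
Qed.

Theorem proposition5p5 (G : Type) (op : G -> G -> G) (e : G) (inv : G -> G)
    (N : G -> Prop) (S : zmodType) (mul : S -> S -> S) (Sg : G -> S -> Prop) :
  is_group op e inv ->
  is_normal_subgroup op e inv N ->
  is_rng mul ->
  is_grading op mul Sg ->
  symmetric_grading inv mul Sg ->
  forall C : G -> Prop, is_coset op inv N C ->
    forall s : S,
      setmul mul (setmul mul (induced_comp Sg C) (induced_comp Sg (setinv inv C)))
             (induced_comp Sg C) s
      <-> induced_comp Sg C s.
Proof.
move=> Hgp HN Hr Hg Hsym C [g0 HC] s; split.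
- move=> Hs; apply: (PC_to_ic Hg).
  pose D12 := fun k => exists g h, C g /\ C (inv h) /\ k = op g h.
  apply: (setmul_ind (PC0 _ _) (@PCD _ _ _ _) _ Hs) => a c Ha Hc.
  apply: (PC_mul (D1 := D12) Hr Hg _ _ (ic_to_PC Hc)); last first.
    apply: (setmul_ind (PC0 _ _) (@PCD _ _ _ _) _ Ha) => x y Hx Hy.
    apply: (PC_mul Hr Hg _ (ic_to_PC Hx) (ic_to_PC Hy)).
    by move=> g h Cg Ch; exists g, h.
  move=> k l [g [h [Cg [Ch ->]]]] Cl.
  apply/HC; move/HC: Cg => n1; move/HC: Ch => n2; move/HC: Cl => n3.
  have n2' := nsg_inv HN n2; rewrite (inv_op _ _ Hgp) (inv_inv _ Hgp) in n2'.
  have := nsg_mul HN (nsg_mul HN n1 n2') n3.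
  by rewrite !(grp_assoc Hgp) -(grp_assoc Hgp _ (inv (inv g0))) (grp_invl Hgp) (grp_idr Hgp).
- move=> [l [x [Hl ->]]].
  elim: l Hl => [|g l IH] Hl; first by rewrite big_nil; apply: setmul0.
  rewrite big_cons; apply: setmulD; last by apply: IH => h Hh; apply: Hl; right.
  have [Cg Sx] := Hl g (or_introl erefl).
  have Hin : forall v, Sg g v -> induced_comp Sg C v.
    by move=> v Sv; apply: (PC_to_ic Hg); apply: (PC_hom Cg Sv).
  have Hin' : forall v, Sg (inv g) v -> induced_comp Sg (setinv inv C) v.
    move=> v Sv; apply: (PC_to_ic Hg); apply: (PC_hom (g := inv g)) Sv.
    by rewrite /setinv (inv_inv _ Hgp).
  apply: (setmul_mono (A := setmul mul (Sg g) (Sg (inv g))) (B := Sg g) _ Hin).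
    by move=> a; apply: setmul_mono.
  by apply/Hsym.
Qed.
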